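(* Let $I$ be a countable set with $|I|\ge2$, let each $\mathfrak{M}_i=(S_i,\mathcal{L}_i)$, $i\in I$, be a Veblenian gamma space all of whose lines have at least $4$ points, let $\mathfrak{M}=\bigotimes_{i\in I}\mathfrak{M}_i$ with point set $S$, and let $\mathcal{H}$ be a hyperplane of $\mathfrak{M}$. For $X\subseteq S$ the following are equivalent: (i) $X$ is a strong subspace of $\mathfrak{M}\setminus\mathcal{H}$; (ii) $X=a[i/Y_i]\setminus\mathcal{H}$ for some $a\in S$, $i\in I$ and a strong subspace $Y_i$ of $\mathfrak{M}_i$; (iii) $X=a[i/X_i]$ for some $a\in S$, $i\in I$ and a strong subspace $X_i$ of $\mathfrak{M}_i\setminus\mathcal{H}^{[a]}_i$.
   Context: A partial linear space is a pair $(S,\mathcal{L})$ of points and lines such that every line has at least two points, every point lies on a line, two distinct lines share at most one point; points are collinear if on a common line. A subspace is a set such that any line meeting it in at least two points lies in it; it is strong if any two of its points are collinear. A hyperplane is a proper subspace meeting every line. A gamma space is one in which the set of points collinear with any given point is a subspace. It is Veblenian if for any two distinct lines $L_1,L_2$ through a point $p$ and any two distinct lines $K_1,K_2$ not through $p$ such that each $K_j$ meets both $L_1,L_2$, the lines $K_1,K_2$ meet. Segre product: points $S=\prod_i S_i$; $a[i/x]$ is $a$ with $i$-th coordinate replaced by $x$, $a[i/A]=\{a[i/x]:x\in A\}$; lines $a[i/l]$, $l\in\mathcal{L}_i$. $\mathcal{H}^{[a]}_i=\{x\in S_i:a[i/x]\in\mathcal{H}\}$. For a subset $\mathcal{G}$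 of the points of a partial linear space $\mathfrak{N}$ which is a hyperplane or the whole point set, the complement $\mathfrak{N}\setminus\mathcal{G}$ has the points not in $\mathcal{G}$ and the lines $L\setminus\mathcal{G}$ for lines $L\not\subseteq\mathcal{G}$ (and parallelism: lines equivalent iff they meet $\mathcal{G}$ in the same point); subspaces and strong subspaces of a complement are taken with respect to these points and lines. *)

(* Defs.v *)
From mathcomp Require Import all_boot.
Unset Printing Implicit Defensive.

(* A point-line geometry: points are the elements of P satisfying Pts;
   lines are point sets (predicates on P) satisfying Ls.  Lines are compared
   extensionally (by their points). *)

Definition same_set {P : Type} (A B : P -> Prop) := forall x, A x <-> B x.

Definition is_pls {P : Type} (Ls : (P -> Prop) -> Prop) : Prop :=
  (forall L, Ls L -> exists x y, x <> y /\ L x /\ L y) /\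
  (forall p, exists L, Ls L /\ L p) /\
  (forall L K, Ls L -> Ls K -> ~ same_set L K ->
     forall x y, L x -> L y -> K x -> K y -> x = y).

Definition collinear {P : Type} (Ls : (P -> Prop) -> Prop) (x y : P) : Prop :=
  exists L, Ls L /\ L x /\ L y.

Definition subspace {P : Type} (Pts : P -> Prop) (Ls : (P -> Prop) -> Prop)
  (X : P -> Prop) : Prop :=
  (forall x, X x -> Pts x) /\
  (forall L, Ls L -> forall x y, x <> y -> L x -> L y -> X x -> X y ->
     forall z, L z -> X z).

Definition strong_subspace {P : Type} (Pts : P -> Prop) (Ls : (P -> Prop) -> Prop)
  (X : P -> Prop) : Prop :=
  subspace Pts Ls X /\ (forall x y, X x -> X y -> collinear Ls x y).

Definition allpts {P : Type} : P -> Prop := fun _ => True.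

Definition hyperplane {P : Type} (Pts : P -> Prop) (Ls : (P -> Prop) -> Prop)
  (H : P -> Prop) : Prop :=
  subspace Pts Ls H /\ (exists p, Pts p /\ ~ H p) /\
  (forall L, Ls L -> exists p, L p /\ H p).

Definition gamma_space {P : Type} (Ls : (P -> Prop) -> Prop) : Prop :=
  forall p, subspace allpts Ls (collinear Ls p).

Definition veblenian {P : Type} (Ls : (P -> Prop) -> Prop) : Prop :=
  forall (p : P) L1 L2 K1 K2, Ls L1 -> Ls L2 -> Ls K1 -> Ls K2 ->
    ~ same_set L1 L2 -> L1 p -> L2 p ->
    ~ same_set K1 K2 -> ~ K1 p -> ~ K2 p ->
    (exists x, K1 x /\ L1 x) -> (exists x, K1 x /\ L2 x) ->
    (exists x, K2 x /\ L1 x) -> (exists x, K2 x /\ L2 x) ->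
    exists x, K1 x /\ K2 x.

Definition lines_ge4 {P : Type} (Ls : (P -> Prop) -> Prop) : Prop :=
  forall L, Ls L -> exists x1 x2 x3 x4,
    (L x1 /\ L x2 /\ L x3 /\ L x4) /\
    (x1 <> x2 /\ x1 <> x3 /\ x1 <> x4 /\ x2 <> x3 /\ x2 <> x4 /\ x3 <> x4).

Definition comp_pts {P : Type} (Pts : P -> Prop) (G : P -> Prop) : P -> Prop :=
  fun x => Pts x /\ ~ G x.

Definition comp_lines {P : Type} (Ls : (P -> Prop) -> Prop) (G : P -> Prop)
  : (P -> Prop) -> Prop :=
  fun K => exists L, Ls L /\ (exists p, L p /\ ~ G p) /\
    (forall x, K x <-> (L x /\ ~ G x)).

Section Segre.
Variables (I : countType) (S : I -> Type).

Definition upd (a : forall j, S j) (i : I) (x : S i) : forall j, S j :=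
  fun j => match i =P j with
           | ReflectT e => eq_rect i S x j e
           | ReflectF _ => a j
           end.

Definition upd_set (a : forall j, S j) (i : I) (A : S i -> Prop)
  : (forall j, S j) -> Prop :=
  fun b => exists x, A x /\ b = upd a i x.

Definition segre_lines (Ls : forall i, (S i -> Prop) -> Prop)
  : ((forall j, S j) -> Prop) -> Prop :=
  fun K => exists (a : forall j, S j) (i : I) (l : S i -> Prop),
    Ls i l /\ (forall b, K b <-> upd_set a i l b).

Definition hsec (H : (forall j, S j) -> Prop) (a : forall j, S j) (i : I)
  : S i -> Prop := fun x => H (upd a i x).
End Segre.
Arguments upd {I S} a i x j.
Arguments upd_set {I S} a i A b.
Arguments segre_lines {I S} Ls K.
Arguments hsec {I S} H a i x.

(* Main.v *)
Require Import Defs.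
From mathcomp Require Import all_boot.
From Stdlib Require Import Classical FunctionalExtensionality.

Lemma F1 {P} {Ls : (P->Prop)->Prop} : is_pls Ls -> forall L K x y, Ls L -> Ls K ->
  L x -> L y -> K x -> K y -> x <> y -> same_set L K.
Proof.
move=> [_ [_ h]] L K x y HL HK Lx Ly Kx Ky nxy. apply: NNPP => ns.
exact: nxy (h L K HL HK ns x y Lx Ly Kx Ky).
Qed.

Lemma F6 {P} {Ls : (P->Prop)->Prop} : lines_ge4 Ls -> forall L a b, Ls L ->
  exists d1 d2, L d1 /\ L d2 /\ d1 <> d2 /\ d1 <> a /\ d1 <> b /\ d2 <> a /\ d2 <> b.
Proof.
move=> h L a b HL. have [x1 [x2 [x3 [x4 [[L1 [L2 [L3 L4]]] [n12 [n13 [n14 [n23 [n24 n34]]]]]]]]]] := h L HL.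
have D : forall x, (x = a \/ x = b) \/ (x <> a /\ x <> b).
  move=> x; case: (classic (x = a)) => ?; first by left; left.
  case: (classic (x = b)) => ?; first by left; right. by right.
case: (D x1) => [h1|[h1 h1']]; case: (D x2) => [h2|[h2 h2']];
  case: (D x3) => [h3|[h3 h3']]; case: (D x4) => [h4|[h4 h4']];
  try (exists x1, x2; by split; [|split; [|split; [|split;[|split;[|split]]]]]);
  try (exists x1, x3; by split; [|split; [|split; [|split;[|split;[|split]]]]]);
  try (exists x1, x4; by split; [|split; [|split; [|split;[|split;[|split]]]]]);
  try (exists x2, x3; by split; [|split; [|split; [|split;[|split;[|split]]]]]);
  try (exists x2, x4; by split; [|split; [|split; [|split;[|split;[|split]]]]]);
  try (exists x3, x4; by split; [|split; [|split; [|split;[|split;[|split]]]]]);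
  exfalso;
  repeat match goal with H : _ \/ _ |- _ => destruct H end; subst; congruence.
Qed.

Definition ctx {P} (Ls : (P->Prop)->Prop) (G X : P -> Prop) :=
  is_pls Ls /\ gamma_space Ls /\ veblenian Ls /\ lines_ge4 Ls /\
  (forall L, Ls L -> forall x y, x <> y -> L x -> L y -> G x -> G y -> forall z, L z -> G z) /\
  strong_subspace (comp_pts allpts G) (comp_lines Ls G) X.

Definition Yof {P} (Ls : (P->Prop)->Prop) (X : P -> Prop) z :=
  X z \/ exists L x1 x2, Ls L /\ x1 <> x2 /\ L x1 /\ L x2 /\ X x1 /\ X x2 /\ L z.

Lemma Xng {P} {Ls : (P->Prop)->Prop} {G X : P -> Prop} : ctx Ls G X -> forall z, X z -> ~ G z.
Proof. move=> [_ [_ [_ [_ [_ [[h _] _]]]]]] z /h []. done. Qed.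

Lemma F2 {P} {Ls : (P->Prop)->Prop} {G X : P -> Prop} : ctx Ls G X -> forall L x y z, Ls L -> L x -> L y -> x <> y ->
  X x -> X y -> L z -> ~ G z -> X z.
Proof.
move=> C; have XG := Xng C; move: C => [_ [_ [_ [_ [_ [[_ h] _]]]]]] L x y z HL Lx Ly nxy Xx Xy Lz Gz.
apply: (h (fun w => L w /\ ~ G w) _ x y nxy _ _ Xx Xy z).
- exists L; split => //; split => //; exists x; split => //; exact: XG.
- by split => //; exact: XG.
- by split => //; exact: XG.
- by [].
Qed.

Lemma F3 {P} {Ls : (P->Prop)->Prop} {G X : P -> Prop} : ctx Ls G X -> forall x y, X x -> X y -> collinear Ls x y.
Proof.
move=> [_ [_ [_ [_ [_ [_ h]]]]]] x y Xx Xy.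
have [K [[L [HL [_ e]]] [Kx Ky]]] := h x y Xx Xy.
exists L; split => //; split; [exact: (proj1 (proj1 (e x) Kx)) | exact: (proj1 (proj1 (e y) Ky))].
Qed.

Lemma F5 {P} {Ls : (P->Prop)->Prop} {G X : P -> Prop} : ctx Ls G X -> forall p x y z L, collinear Ls p x -> collinear Ls p y ->
  x <> y -> Ls L -> L x -> L y -> L z -> collinear Ls p z.
Proof.
move=> [_ [g _]] p x y z L cx cy nxy HL Lx Ly Lz. have [_ h] := g p.
exact: (h L HL x y nxy Lx Ly cx cy z Lz).
Qed.

Lemma Csym {P} {Ls : (P->Prop)->Prop} {x y} : collinear Ls x y -> collinear Ls y x.
Proof. by move=> [L [HL [a b]]]; exists L. Qed.

Lemma Fw {P} {Ls : (P->Prop)->Prop} {G X : P -> Prop} : ctx Ls G X -> forall L a b, Ls L -> L a -> L b -> ~ G a ->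
  exists w, L w /\ w <> a /\ w <> b /\ ~ G w.
Proof.
move=> [_ [_ [_ [g4 [Gs _]]]]] L a b HL La Lb Ga.
have [d1 [d2 [L1 [L2 [n12 [n1a [n1b [n2a n2b]]]]]]]] := F6 g4 L a b HL.
case: (classic (G d1)) => G1; last by exists d1.
case: (classic (G d2)) => G2; last by exists d2.
by exfalso; apply: Ga; exact: (Gs L HL d1 d2 n12 L1 L2 G1 G2 a La).
Qed.

Lemma YG {P} {Ls : (P->Prop)->Prop} {G X : P -> Prop} : ctx Ls G X -> forall z, Yof Ls X z -> ~ G z -> X z.
Proof.
move=> C z [//|[L [x1 [x2 [HL [n [L1 [L2 [X1 [X2 Lz]]]]]]]]]] Gz.
exact: (F2 C L x1 x2 z).
Qed.

Lemma Ycol1 {P} {Ls : (P->Prop)->Prop} {G X : P -> Prop} : ctx Ls G X -> forall x g, X x -> Yof Ls X g -> collinear Ls x g.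
Proof.
move=> C x g Xx [Xg|[L [x1 [x2 [HL [n [L1 [L2 [X1 [X2 Lg]]]]]]]]]]; first exact: (F3 C).
exact: (F5 C x x1 x2 g L (F3 C _ _ Xx X1) (F3 C _ _ Xx X2)).
Qed.

Lemma Ycol2 {P} {Ls : (P->Prop)->Prop} {G X : P -> Prop} : ctx Ls G X -> forall g h, Yof Ls X g -> Yof Ls X h -> collinear Ls g h.
Proof.
move=> C g h Yg [Xh|[L [x1 [x2 [HL [n [L1 [L2 [X1 [X2 Lh]]]]]]]]]].
  by apply: Csym; exact: (Ycol1 C).
exact: (F5 C g x1 x2 h L (Csym (Ycol1 C x1 g X1 Yg)) (Csym (Ycol1 C x2 g X2 Yg))).
Qed.

Lemma ctx_pls {P} {Ls : (P->Prop)->Prop} {G X : P -> Prop} : ctx Ls G X -> is_pls Ls.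
Proof. by case. Qed.
Lemma ctx_veb {P} {Ls : (P->Prop)->Prop} {G X : P -> Prop} : ctx Ls G X -> veblenian Ls.
Proof. by move=> [_ [_ [v _]]]. Qed.
Lemma ctx_G {P} {Ls : (P->Prop)->Prop} {G X : P -> Prop} : ctx Ls G X ->
  forall L, Ls L -> forall x y, x <> y -> L x -> L y -> G x -> G y -> forall z, L z -> G z.
Proof. by move=> [_ [_ [_ [_ [g _]]]]]. Qed.

Lemma MIX {P} {Ls : (P->Prop)->Prop} {G X : P -> Prop} : ctx Ls G X -> forall l p q,
  Ls l -> l p -> l q -> X p -> Yof Ls X q -> G q ->
  exists x1 x2, x1 <> x2 /\ l x1 /\ l x2 /\ X x1 /\ X x2.
Proof.
move=> C l p q Hl lp lq Xp Yq Gq.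
have pl := ctx_pls C; have V := ctx_veb C; have Gs := ctx_G C; have XG := Xng C.
have npq : p <> q by move=> e; subst; exact: XG Xp Gq.
case: Yq => [Xq|[m [y1 [y2 [Hm [n12 [m1 [m2 [X1 [X2 mq]]]]]]]]]]; first by exfalso; exact: XG Xq Gq.
case: (classic (same_set l m)) => slm.
  by exists y1, y2; do ![split => //]; apply/slm.
have nmp : ~ m p by move=> mp; exact: slm (F1 pl l m p q Hl Hm lp lq mp mq npq).
have npy1 : p <> y1 by move=> e; subst; exact: nmp.
have [L2 [HL2 [L2p L2y1]]] := F3 C p y1 Xp X1.
have [w [L2w [nwp [nwy1 Gw]]]] := Fw C L2 p y1 HL2 L2p L2y1 (XG _ Xp).
have Xw : X w := F2 C L2 p y1 w HL2 L2p L2y1 npy1 Xp X1 L2w Gw.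
have [z [lz [nzp [nzq Gz]]]] := Fw C l p q Hl lp lq (XG _ Xp).
have [K2 [HK2 [K2w K2z]]] : collinear Ls w z.
  exact: (F5 C w p q z l (F3 C w p Xw Xp) (Ycol1 C w q Xw (or_intror (ex_intro _ m (ex_intro _ y1 (ex_intro _ y2 (conj Hm (conj n12 (conj m1 (conj m2 (conj X1 (conj X2 mq))))))))))) npq Hl lp lq lz).
have nlL2 : ~ same_set l L2.
  move=> s; apply: slm; apply: (F1 pl l m y1 q Hl Hm _ lq m1 mq).
  - by apply/s.
  - by move=> e; subst; exact: XG X1 Gq.
have nzw : z <> w.
  by move=> e; subst; apply: nlL2; exact: (F1 pl l L2 p w Hl HL2 lp lz L2p L2w (nesym nwp)).
have nmK2 : ~ same_set m K2.
  by move=> s; apply: slm; apply: (F1 pl l m z q Hl Hm lz lq _ mq nzq); apply/s.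
have nK2p : ~ K2 p.
  move=> K2p; apply: nlL2; apply: (F1 pl l L2 p w Hl HL2 lp _ L2p L2w (nesym nwp)).
  by apply/(F1 pl K2 l p z HK2 Hl K2p K2z lp lz (nesym nzp)).
have [s [ms K2s]] := V p l L2 m K2 Hl HL2 Hm HK2 nlL2 lp L2p nmK2 nmp nK2p
  (ex_intro _ q (conj mq lq)) (ex_intro _ y1 (conj m1 L2y1))
  (ex_intro _ z (conj K2z lz)) (ex_intro _ w (conj K2w L2w)).
have Gs' : ~ G s.
  move=> Gs0.
  have esq : s = q.
    apply: NNPP => nsq. apply: (XG _ X1). exact: (Gs m Hm s q nsq ms mq Gs0 Gq y1 m1).
  subst s. apply: nK2p.
  have e : same_set K2 l := F1 pl K2 l q z HK2 Hl K2s K2z lq lz (nesym nzq).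
  exfalso; apply: nlL2; apply: (F1 pl l L2 p w Hl HL2 lp _ L2p L2w (nesym nwp)).
  by apply/e.
have Xs : X s := F2 C m y1 y2 s Hm m1 m2 n12 X1 X2 ms Gs'.
have nsw : s <> w.
  move=> e; subst s. apply: nmp. apply/(F1 pl m L2 y1 w Hm HL2 m1 ms L2y1 L2w (nesym nwy1)).
  done.
have Xz : X z := F2 C K2 s w z HK2 K2s K2w nsw Xs Xw K2z Gz.
by exists p, z; do ![split => //]; apply: nesym.
Qed.

Lemma Ysub {P} {Ls : (P->Prop)->Prop} {G X : P -> Prop} : ctx Ls G X -> forall l, Ls l ->
  forall p q, p <> q -> l p -> l q -> Yof Ls X p -> Yof Ls X q -> forall z, l z -> Yof Ls X z.
Proof.
move=> C l Hl p q npq lp lq Yp Yq z lz.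
have pl := ctx_pls C; have V := ctx_veb C; have Gs := ctx_G C; have XG := Xng C.
have TWO : (exists x1 x2, x1 <> x2 /\ l x1 /\ l x2 /\ X x1 /\ X x2) -> Yof Ls X z.
  move=> [x1 [x2 [n [l1 [l2 [X1 X2]]]]]]; right; exists l, x1, x2; done.
case: (classic (G p)) => Gp; case: (classic (G q)) => Gq.
- case: (classic (z = p)) => zp; first by subst.
  case: (classic (z = q)) => zq; first by subst.
  have lG : forall w, l w -> G w := Gs l Hl p q npq lp lq Gp Gq.
  case: Yp => [Xp|[m1 [x [x' [Hm1 [nxx' [m1x [m1x' [Xx [Xx' m1p]]]]]]]]]];
    first by exfalso; exact: XG Xp Gp.
  have [K1 [HK1 [K1x K1q]]] := Ycol1 C x q Xx Yq.
  have [K2 [HK2 [K2x' K2z]]] : collinear Ls x' z.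
    apply: (F5 C x' p q z l _ (Ycol1 C x' q Xx' Yq) npq Hl lp lq lz).
    by exists m1.
  have nlx : forall w, X w -> ~ l w by move=> w Xw lw; exact: XG _ Xw (lG _ lw).
  have nlm1 : ~ same_set l m1 by move=> s; apply: (nlx x Xx); apply/s.
  have nm1q : ~ m1 q.
    by move=> m1q; apply: nlm1; exact: (F1 pl l m1 p q Hl Hm1 lp lq m1p m1q npq).
  have nK1K2 : ~ same_set K1 K2.
    move=> s; apply: nm1q.
    have e : same_set K1 m1 := F1 pl K1 m1 x x' HK1 Hm1 K1x (proj2 (s x') K2x') m1x m1x' nxx'.
    by apply/e.
  have nK1p : ~ K1 p.
    move=> K1p; apply: (nlx x Xx).
    by apply/(F1 pl K1 l p q HK1 Hl K1p K1q lp lq npq).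
  have nK2p : ~ K2 p.
    move=> K2p; apply: (nlx x' Xx').
    by apply/(F1 pl K2 l p z HK2 Hl K2p K2z lp lz (nesym zp)).
  have [s [K1s K2s]] := V p l m1 K1 K2 Hl Hm1 HK1 HK2 nlm1 lp m1p nK1K2 nK1p nK2p
    (ex_intro _ q (conj K1q lq)) (ex_intro _ x (conj K1x m1x))
    (ex_intro _ z (conj K2z lz)) (ex_intro _ x' (conj K2x' m1x')).
  have Gs' : ~ G s.
    move=> Gs0.
    have esq : s = q.
      apply: NNPP => nsq. apply: (XG _ Xx). exact: (Gs K1 HK1 s q nsq K1s K1q Gs0 Gq x K1x).
    subst s. apply: (nlx x' Xx').
    by apply/(F1 pl K2 l q z HK2 Hl K2s K2z lq lz (nesym zq)).
  have [y1 [y2 [ny [K1y1 [K1y2 [Xy1 Xy2]]]]]] := MIX C K1 x q HK1 K1x K1q Xx Yq Gq.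
  have Xs : X s := F2 C K1 y1 y2 s HK1 K1y1 K1y2 ny Xy1 Xy2 K1s Gs'.
  have nsx' : s <> x'.
    move=> e; subst s. apply: nm1q.
    by apply/(F1 pl K1 m1 x x' HK1 Hm1 K1x K1s m1x m1x' nxx').
  right; exists K2, s, x'; done.
- apply: TWO.
  have [x1 [x2 [n [l1 [l2 [X1 X2]]]]]] := MIX C l q p Hl lq lp (YG C q Yq Gq) Yp Gp.
  by exists x1, x2.
- apply: TWO.
  exact: MIX C l p q Hl lp lq (YG C p Yp Gp) Yq Gq.
- apply: TWO. exists p, q; split => //; split => //; split => //; split; [exact: (YG C p Yp Gp) | exact: (YG C q Yq Gq)].
Qed.

Lemma ext_lemma {P} (Ls : (P->Prop)->Prop) (G X : P -> Prop) :
  is_pls Ls -> gamma_space Ls -> veblenian Ls -> lines_ge4 Ls ->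
  (forall L, Ls L -> forall x y, x <> y -> L x -> L y -> G x -> G y -> forall z, L z -> G z) ->
  strong_subspace (comp_pts allpts G) (comp_lines Ls G) X ->
  exists Y, strong_subspace allpts Ls Y /\ forall z, X z <-> Y z /\ ~ G z.
Proof.
move=> h1 h2 h3 h4 h5 h6.
have C : ctx Ls G X by do ![split => //].
exists (Yof Ls X); split.
  split; last exact: (Ycol2 C).
  split => //. move=> L HL x y nxy Lx Ly Yx Yy z Lz. exact: (Ysub C L HL x y nxy Lx Ly Yx Yy z Lz).
move=> z; split.
  by move=> Xz; split; [left | exact: Xng C z Xz].
by move=> [Yz Gz]; exact: YG C z Yz Gz.
Qed.

Lemma upd_same {I : countType} {S : I -> Type} (a : forall j, S j) i x : upd a i x i = x.
Proof.
rewrite /upd; case: (i =P i) => [e|n] //.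
by rewrite (eq_irrelevance e (erefl i)).
Qed.

Lemma upd_other {I : countType} {S : I -> Type} (a : forall j, S j) i x j : i <> j -> upd a i x j = a j.
Proof. by rewrite /upd; case: (i =P j). Qed.

Lemma upd_inj {I : countType} {S : I -> Type} (a : forall j, S j) i x y : upd a i x = upd a i y -> x = y.
Proof. by move=> e; rewrite -(upd_same a i x) -(upd_same a i y) e. Qed.

Lemma upd_eq {I : countType} {S : I -> Type} (a b : forall j, S j) i :
  (forall j, j <> i -> b j = a j) -> b = upd a i (b i).
Proof.
move=> h; apply: functional_extensionality_dep => j.
case: (classic (i = j)) => [e|n]; first by subst; rewrite upd_same.
by rewrite upd_other // h //; apply: nesym.
Qed.

Lemma upd_self {I : countType} {S : I -> Type} (a : forall j, S j) i : upd a i (a i) = a.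
Proof. by rewrite -upd_eq. Qed.

Lemma upd_base {I : countType} {S : I -> Type} (a c : forall j, S j) i w :
  (forall j, j <> i -> c j = a j) -> upd c i w = upd a i w.
Proof.
move=> h; apply: functional_extensionality_dep => j.
case: (classic (i = j)) => [e|n]; first by subst; rewrite !upd_same.
by rewrite !upd_other // h //; apply: nesym.
Qed.

Lemma seg_agree {I : countType} {S : I -> Type} (Ls : forall i, (S i -> Prop) -> Prop) L p q :
  segre_lines Ls L -> L p -> L q -> exists k, forall m, m <> k -> p m = q m.
Proof.
move=> [c [k [l [_ e]]]] Lp Lq.
have [u [_ ->]] := proj1 (e p) Lp. have [v [_ ->]] := proj1 (e q) Lq.
by exists k => m nm; rewrite !upd_other //; apply: nesym.
Qed.

Lemma seg_line {I : countType} {S : I -> Type} (Ls : forall i, (S i -> Prop) -> Prop) a i L :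
  Ls i L -> segre_lines Ls (upd_set a i L).
Proof. by move=> h; exists a, i, L. Qed.

Definition SSp {I : countType} {S : I -> Type} (Ls : forall i, (S i -> Prop) -> Prop)
  (H X : (forall j, S j) -> Prop) :=
  strong_subspace (comp_pts allpts H) (comp_lines (segre_lines Ls) H) X.

Definition P3 {I : countType} {S : I -> Type} (Ls : forall i, (S i -> Prop) -> Prop)
  (H X : (forall j, S j) -> Prop) :=
  exists (a : forall j, S j) (i : I) (Xi : S i -> Prop),
       strong_subspace (comp_pts allpts (hsec H a i))
                       (comp_lines (Ls i) (hsec H a i)) Xi /\
       (forall b, X b <-> upd_set a i Xi b).

Lemma colag {I : countType} {S : I -> Type} (Ls : forall i, (S i -> Prop) -> Prop) H X :
  SSp Ls H X -> forall p q, X p -> X q -> exists k, forall m, m <> k -> p m = q m.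
Proof.
move=> [_ Xcol] p q Xp Xq. have [K [[L [HL [_ e]]] [Kp Kq]]] := Xcol p q Xp Xq.
exact: (seg_agree Ls L p q HL (proj1 (proj1 (e p) Kp)) (proj1 (proj1 (e q) Kq))).
Qed.

Lemma T13 {I : countType} {S : I -> Type} (Ls : forall i, (S i -> Prop) -> Prop) H X :
  (exists i0 : I, True) -> (forall i, is_pls (Ls i)) -> (exists p0 : forall j, S j, True) ->
  SSp Ls H X -> P3 Ls H X.
Proof.
move=> [i0 _] pls [p0 _] SX.
have CA := colag Ls H X SX. move: (SX) => [[Xpts Xsub] Xcol].
have XH : forall b, X b -> ~ H b by move=> b /Xpts [].
case: (classic (exists a, X a)) => [[a Xa]|nX].
2:{ exists p0, i0, (fun _ => False); split.
    - split; first by split => // x. by move=> x y [].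
    - move=> b; split => [Xb|[x [[] _]]]. by exfalso; apply: nX; exists b. }
case: (classic (exists b, X b /\ b <> a)) => [[b [Xb nba]]|nb].
2:{ exists a, i0, (fun x => x = a i0); split.
    - split.
      + split; first by move=> x /= ex; subst x; split => //; rewrite /hsec upd_self; exact: XH.
        by move=> L _ x y nxy _ _ /= ex ey; subst x y.
      + move=> x y /= ex ey; subst x y. have [L [HL La]] := (proj1 (proj2 (pls i0))) (a i0).
        exists (fun w => L w /\ ~ hsec H a i0 w); split; last by split; split => //; rewrite /hsec upd_self; exact: XH.
        exists L; split => //; split => //; exists (a i0); split => //; rewrite /hsec upd_self; exact: XH.
    - move=> c; split.
      + move=> Xc. have eca : c = a by apply: NNPP => n; apply: nb; exists c.
        by subst; exists (a i0); split => //; rewrite upd_self.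
      + by move=> [x [-> ->]]; rewrite upd_self. }
have [i Hab] := CA a b Xa Xb.
have nab : a i <> b i.
  move=> e; apply: nba; apply: functional_extensionality_dep => j.
  case: (classic (j = i)) => [->|n]; first by [].
  by rewrite Hab.
have key : forall c, X c -> forall m, m <> i -> c m = a m.
  move=> c Xc m nmi; apply: NNPP => ncm.
  have [j Hj] := CA a c Xa Xc. have [k Hk] := CA b c Xb Xc.
  have ejm : m = j by apply: NNPP => n; apply: ncm; rewrite Hj.
  have ekm : m = k.
    apply: NNPP => n; apply: ncm; rewrite -Hk // Hab //.
  subst j k.
  have nim : i <> m by apply: nesym.
  by apply: nab; rewrite (Hj i nim) (Hk i nim).
exists a, i, (fun x => X (upd a i x)); split; last first.
  move=> c; split.
  - move=> Xc; exists (c i); split; last exact: upd_eq (key c Xc).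
    by rewrite -upd_eq //; exact: key.
  - by move=> [x [Xx ->]].
split; [split|].
- by move=> x Xx; split => //; exact: XH.
- move=> K [L [HL [[p [Lp Gp]] eK]]] x y nxy Kx Ky Xx Xy z Kz.
  have [Lx Gx] := proj1 (eK x) Kx. have [Ly Gy] := proj1 (eK y) Ky. have [Lz Gz] := proj1 (eK z) Kz.
  apply: (Xsub (fun b => upd_set a i L b /\ ~ H b) _ (upd a i x) (upd a i y) _ _ _ Xx Xy).
  + exists (upd_set a i L); split; first exact: seg_line.
    split => //. by exists (upd a i p); split => //; exists p.
  + by move=> e; apply: nxy; exact: upd_inj e.
  + by split => //; exists x.
  + by split => //; exists y.
  + by split => //; exists z.
- move=> x y Xx Xy.
  case: (classic (x = y)) => [<-|nxy].
    have [L [HL Lx]] := (proj1 (proj2 (pls i))) x.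
    exists (fun w => L w /\ ~ hsec H a i w); split; last by split; split => //; exact: XH.
    exists L; split => //; split => //; exists x; split => //; exact: XH.
  have [K [[L [[c [k [l [Hl eL]]]] [_ eK]]] [Kx Ky]]] := Xcol _ _ Xx Xy.
  have [u [lu eu]] := proj1 (eL _) (proj1 (proj1 (eK _) Kx)).
  have [v [lv ev]] := proj1 (eL _) (proj1 (proj1 (eK _) Ky)).
  case: (classic (k = i)) => [eki|nki]; last first.
    exfalso; apply: nxy.
    move: (f_equal (fun f => f i) eu) (f_equal (fun f => f i) ev) => /=.
    by rewrite !upd_same !upd_other // => -> ->.
  subst k.
  move: (f_equal (fun f => f i) eu) (f_equal (fun f => f i) ev) => /=.
  rewrite !upd_same => ex ey; subst u v.
  exists (fun w => l w /\ ~ hsec H a i w); split; last by split; split => //; exact: XH.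
  exists l; split => //; split => //; exists x; split => //; exact: XH.
Qed.

Lemma T31 {I : countType} {S : I -> Type} (Ls : forall i, (S i -> Prop) -> Prop) H X :
  P3 Ls H X -> SSp Ls H X.
Proof.
move=> [a [i [Xi [[[Xpts Xsub] Xcol] eX]]]].
have XG : forall x, Xi x -> ~ hsec H a i x by move=> x /Xpts [].
split; [split|].
- move=> b /eX [x [Xx ->]]; split => //; exact: XG.
- move=> K [L [[c [k [l [Hl eL]]]] [_ eK]]] p1 p2 n12 Kp1 Kp2 Xp1 Xp2 z Kz.
  have [x [Xx ex]] := proj1 (eX _) Xp1. have [y [Xy ey]] := proj1 (eX _) Xp2.
  have [L1 _] := proj1 (eK _) Kp1. have [L2 _] := proj1 (eK _) Kp2. have [Lz Hz] := proj1 (eK _) Kz.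
  have [u [lu eu]] := proj1 (eL _) L1. have [v [lv ev]] := proj1 (eL _) L2.
  have [w [lw ew]] := proj1 (eL _) Lz.
  have nxy : x <> y by move=> e; apply: n12; rewrite ex ey e.
  case: (classic (k = i)) => [eki|nki]; last first.
    exfalso; apply: nxy.
    move: (f_equal (fun f => f i) eu) (f_equal (fun f => f i) ev) => /=.
    by rewrite ex ey !upd_same !upd_other // => -> ->.
  subst k.
  have ca : forall j, j <> i -> c j = a j.
    move=> j nj. move: (f_equal (fun f => f j) eu) => /=.
    by rewrite ex !upd_other //; apply: nesym.
  move: (f_equal (fun f => f i) eu) (f_equal (fun f => f i) ev) => /=.
  rewrite ex ey !upd_same => exu eyv; subst u v.
  rewrite (upd_base a c i w ca) in ew.
  apply/eX; exists w; split => //.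
  apply: (Xsub (fun t => l t /\ ~ hsec H a i t) _ x y nxy _ _ Xx Xy).
  + exists l; split => //; split => //; exists x; split => //; exact: XG.
  + by split => //; exact: XG.
  + by split => //; exact: XG.
  + by split => //; rewrite /hsec -ew.
- move=> p1 p2 /eX [x [Xx ->]] /eX [y [Xy ->]].
  have [K [[L [HL [[q [Lq Gq]] eK]]] [Kx Ky]]] := Xcol x y Xx Xy.
  have [Lx Gx] := proj1 (eK _) Kx. have [Ly Gy] := proj1 (eK _) Ky.
  exists (fun b => upd_set a i L b /\ ~ H b); split.
  + exists (upd_set a i L); split; first exact: seg_line.
    split => //. by exists (upd a i q); split => //; exists q.
  + by split; split => //; [exists x | exists y].
Qed.

Lemma T23 {I : countType} {S : I -> Type} (Ls : forall i, (S i -> Prop) -> Prop) H X :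
  (exists (a : forall j, S j) (i : I) (Y : S i -> Prop),
       strong_subspace allpts (Ls i) Y /\
       (forall b, X b <-> (upd_set a i Y b /\ ~ H b))) -> P3 Ls H X.
Proof.
move=> [a [i [Y [[[_ Ysub] Ycol] eX]]]].
exists a, i, (fun x => Y x /\ ~ hsec H a i x); split; last first.
  move=> b; split.
  - move=> /eX [[y [Yy ->]] Hb]; by exists y.
  - move=> [x [[Yx Gx] ->]]; apply/eX; split => //; by exists x.
split; [split|].
- by move=> x [_ Gx].
- move=> K [L [HL [_ eK]]] x y nxy Kx Ky [Yx _] [Yy _] z Kz.
  have [Lx _] := proj1 (eK _) Kx. have [Ly _] := proj1 (eK _) Ky. have [Lz Gz] := proj1 (eK _) Kz.
  by split => //; exact: (Ysub L HL x y nxy Lx Ly Yx Yy z Lz).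
- move=> x y [Yx Gx] [Yy Gy].
  have [L [HL [Lx Ly]]] := Ycol x y Yx Yy.
  exists (fun w => L w /\ ~ hsec H a i w); split; last by [].
  exists L; split => //; split => //; by exists x.
Qed.

Lemma hsec_sub {I : countType} {S : I -> Type} (Ls : forall i, (S i -> Prop) -> Prop) H a i :
  subspace allpts (segre_lines Ls) H ->
  forall L, Ls i L -> forall x y, x <> y -> L x -> L y -> hsec H a i x -> hsec H a i y ->
  forall z, L z -> hsec H a i z.
Proof.
move=> [_ Hs] L HL x y nxy Lx Ly Hx Hy z Lz.
apply: (Hs (upd_set a i L) (seg_line Ls a i L HL) (upd a i x) (upd a i y)) => //.
- by move=> e; apply: nxy; exact: upd_inj e.
- by exists x.
- by exists y.
- by exists z.
Qed.

Lemma T32 {I : countType} {S : I -> Type} (Ls : forall i, (S i -> Prop) -> Prop) H X :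
  (forall i, is_pls (Ls i)) -> (forall i, gamma_space (Ls i)) ->
  (forall i, veblenian (Ls i)) -> (forall i, lines_ge4 (Ls i)) ->
  subspace allpts (segre_lines Ls) H ->
  P3 Ls H X ->
  (exists (a : forall j, S j) (i : I) (Y : S i -> Prop),
       strong_subspace allpts (Ls i) Y /\
       (forall b, X b <-> (upd_set a i Y b /\ ~ H b))).
Proof.
move=> h1 h2 h3 h4 Hs [a [i [Xi [SXi eX]]]].
have [Y [SY eY]] := ext_lemma (Ls i) (hsec H a i) Xi (h1 i) (h2 i) (h3 i) (h4 i)
  (hsec_sub Ls H a i Hs) SXi.
exists a, i, Y; split => // b; split.
- move=> /eX [x [/eY [Yx Gx] ->]]; split => //; by exists x.
- move=> [[y [Yy ->]] Hb]; apply/eX; exists y; split => //; exact/eY.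
Qed.

Theorem proposition3p11 (I : countType) (S : I -> Type)
  (Ls : forall i, (S i -> Prop) -> Prop) :
  (exists i j : I, i <> j) ->
  (forall i, is_pls (Ls i)) ->
  (forall i, gamma_space (Ls i)) ->
  (forall i, veblenian (Ls i)) ->
  (forall i, lines_ge4 (Ls i)) ->
  forall H : (forall j, S j) -> Prop,
  hyperplane allpts (segre_lines Ls) H ->
  forall X : (forall j, S j) -> Prop,
  (strong_subspace (comp_pts allpts H) (comp_lines (segre_lines Ls) H) X <->
     exists (a : forall j, S j) (i : I) (Y : S i -> Prop),
       strong_subspace allpts (Ls i) Y /\
       (forall b, X b <-> (upd_set a i Y b /\ ~ H b))) /\
  (strong_subspace (comp_pts allpts H) (comp_lines (segre_lines Ls) H) X <->
     exists (a : forall j, S j) (i : I) (Xi : S i -> Prop),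
       strong_subspace (comp_pts allpts (hsec H a i))
                       (comp_lines (Ls i) (hsec H a i)) Xi /\
       (forall b, X b <-> upd_set a i Xi b)).
Proof.
move=> [i0 [_ _]] h1 h2 h3 h4 H [Hs [[p0 _] _]] X.
have e0 : exists i : I, True by exists i0.
have e1 : exists p : forall j, S j, True by exists p0.
split; split.
- move=> SX; apply: T32 => //; exact: T13.
- move=> P2; apply: T31; exact: T23.
- move=> SX; exact: T13.
- exact: T31.
Qed.
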